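(* In Ruleset A, Ruleset B and Ruleset D, the Quantum variation of Nim on at most $k$ heaps is equivalent to the corresponding game in which only superpositions of at most $k$ classical moves are allowed (i.e. each Q-move is a set of at most $k$ classical moves, with the same ruleset's conditions otherwise).
   Context: Nim: $\mathrm{Nim}(x_1,\ldots,x_k)$ is the position with heaps of $x_1,\ldots,x_k$ tokens; the classical move $(i,-j)$ with $j\ge1$ removes $j$ tokens from heap $i$ and is illegal if heap $i$ has fewer than $j$ tokens; normal play. Quantum variation: a position is a nonempty finite set $\langle G_1,\ldots,G_n\rangle$ of classical positions. A classical move $m$ is legal if legal in some $G_i$. A Q-move is a nonempty set $\{m_1,\ldots,m_k\}$ of legal classical moves, leading to the superposition of all legal results $\Gamma(G_i,m_j)$. Ruleset A: only Q-moves with at least two classical moves allowed. Ruleset B: same, except when the player has exactly one legal classical move overall he may play it alone. Ruleset D: all Q-moves allowed. The player with no allowed Q-move loses. $G\equiv H$ means $G+X$ and $H+X$ have the same outcome for every game $X$ (disjunctive sum). *)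

(* Defs.v *)
From HB Require Import structures.
From mathcomp Require Import all_boot.
From mathcomp Require Import finmap.

Set Implicit Arguments.
Unset Strict Implicit.
Unset Printing Implicit Defensive.

Local Open Scope fset_scope.

(* Short games: finite trees with a list of Left options and a list of Right options. *)
Inductive pgame : Type := PGame of seq pgame & seq pgame.

(* Membership of an option in a list (Prop, no eqType needed). *)
Fixpoint inlist (x : pgame) (s : seq pgame) : Prop :=
  if s is y :: s' then y = x \/ inlist x s' else False.

Definition pgame_left (X : pgame) : seq pgame := let: PGame l _ := X in l.
Definition pgame_right (X : pgame) : seq pgame := let: PGame _ r := X in r.

Section Outcome.
Variables (T : Type) (mvL mvR : T -> T -> Prop).

(* lwin1 x : Left, moving first from x, has a winning strategy (normal play).
   rlose1 x : Right, moving first from x, loses (every Right move leads to a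
   position where Left, moving first, wins). *)
Inductive lwin1 : T -> Prop :=
  | LWin1 x y : mvL x y -> rlose1 y -> lwin1 x
with rlose1 : T -> Prop :=
  | RLose1 x : (forall y, mvR x y -> lwin1 y) -> rlose1 x.

Inductive rwin1 : T -> Prop :=
  | RWin1 x y : mvR x y -> llose1 y -> rwin1 x
with llose1 : T -> Prop :=
  | LLose1 x : (forall y, mvL x y -> rwin1 y) -> llose1 x.

End Outcome.

(* Disjunctive sum of an impartial game (positions T, move relation mv) with a
   short game X: the player to move moves in exactly one component. *)
Definition sumL (T : Type) (mv : T -> T -> Prop) (p q : T * pgame) : Prop :=
  (mv p.1 q.1 /\ q.2 = p.2) \/ (inlist q.2 (pgame_left p.2) /\ q.1 = p.1).
Definition sumR (T : Type) (mv : T -> T -> Prop) (p q : T * pgame) : Prop :=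
  (mv p.1 q.1 /\ q.2 = p.2) \/ (inlist q.2 (pgame_right p.2) /\ q.1 = p.1).

(* G == H : for every game X, G + X and H + X have the same outcome
   (outcome = who wins when Left starts, and who wins when Right starts). *)
Definition game_equiv (T1 T2 : Type) (mv1 : T1 -> T1 -> Prop) (G : T1)
    (mv2 : T2 -> T2 -> Prop) (H : T2) : Prop :=
  forall X : pgame,
    (lwin1 (sumL mv1) (sumR mv1) (G, X) <-> lwin1 (sumL mv2) (sumR mv2) (H, X)) /\
    (rwin1 (sumL mv1) (sumR mv1) (G, X) <-> rwin1 (sumL mv2) (sumR mv2) (H, X)).

Definition cpos (n : nat) := (n.-tuple nat)%type.
(* Classical move (i, -j): remove j tokens from heap i. *)
Definition cmove (n : nat) := ('I_n * nat)%type.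

Definition legal_in (n : nat) (m : cmove n) (g : cpos n) : bool :=
  (0 < m.2) && (m.2 <= tnth g m.1).

Definition apply_move (n : nat) (g : cpos n) (m : cmove n) : cpos n :=
  [tuple (if i == m.1 then tnth g i - m.2 else tnth g i) | i < n].

(* A quantum position is a (nonempty) finite set of classical positions. *)
Definition qpos (n : nat) := {fset cpos n}.

Definition legal_q (n : nat) (P : qpos n) (m : cmove n) : Prop :=
  exists2 g, g \in P & legal_in m g.

Definition qresult (n : nat) (P : qpos n) (M : {fset cmove n}) : qpos n :=
  [fset apply_move g m | g in P, m in M & legal_in m g].

Inductive ruleset := RulesetA | RulesetB | RulesetD.

Definition unique_legal (n : nat) (P : qpos n) : Prop :=
  exists m, legal_q P m /\ forall m', legal_q P m' -> m' = m.

Definition allowed (R : ruleset) (n : nat) (P : qpos n) (M : {fset cmove n}) : Prop :=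
  [/\ M != fset0,
      (forall m, m \in M -> legal_q P m) &
      match R with
      | RulesetA => 2 <= #|` M|
      | RulesetB => 2 <= #|` M| \/ (#|` M| = 1 /\ unique_legal P)
      | RulesetD => True
      end].

Definition qmove (R : ruleset) (n : nat) (P Q : qpos n) : Prop :=
  exists2 M, allowed R P M & Q = qresult P M.

Definition qmove_le (R : ruleset) (k : nat) (n : nat) (P Q : qpos n) : Prop :=
  exists2 M, allowed R P M /\ #|` M| <= k & Q = qresult P M.

(* Main.v *)
Require Import Defs.
From HB Require Import structures.
From mathcomp Require Import all_boot.
From mathcomp Require Import finmap.

Local Open Scope fset_scope.

Scheme lwin1_mind := Induction for lwin1 Sort Prop
  with rlose1_mind := Induction for rlose1 Sort Prop.
Scheme rwin1_mind := Induction for rwin1 Sort Prop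
  with llose1_mind := Induction for llose1 Sort Prop.

Section Bisim.
Variables (T1 T2 : Type) (a1 b1 : T1 -> T1 -> Prop) (a2 b2 : T2 -> T2 -> Prop)
  (S : T1 -> T2 -> Prop).
Hypothesis forth : forall x y x', S x y -> a1 x x' -> exists2 y', a2 y y' & S x' y'.
Hypothesis back : forall x y y', S x y -> b2 y y' -> exists2 x', b1 x x' & S x' y'.

Lemma lwin1_transfer x : lwin1 a1 b1 x -> forall y, S x y -> lwin1 a2 b2 y.
Proof.
move=> H.
apply: (@lwin1_mind T1 a1 b1 (fun x _ => forall y, S x y -> lwin1 a2 b2 y)
  (fun x _ => forall y, S x y -> rlose1 a2 b2 y)) H.
- move=> x0 x' mv _ IH y Sxy.
  have [y' mv' S'] := forth _ _ _ Sxy mv.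
  exact: (LWin1 mv' (IH _ S')).
- move=> x0 _ IH y Sxy; constructor=> y' mv'.
  have [x' mv S'] := back _ _ _ Sxy mv'.
  exact: IH mv _ S'.
Qed.
End Bisim.

Section Bisim2.
Variables (T1 T2 : Type) (a1 b1 : T1 -> T1 -> Prop) (a2 b2 : T2 -> T2 -> Prop)
  (S : T1 -> T2 -> Prop).
Hypothesis forth : forall x y x', S x y -> b1 x x' -> exists2 y', b2 y y' & S x' y'.
Hypothesis back : forall x y y', S x y -> a2 y y' -> exists2 x', a1 x x' & S x' y'.

Lemma rwin1_transfer x : rwin1 a1 b1 x -> forall y, S x y -> rwin1 a2 b2 y.
Proof.
move=> H.
apply: (@rwin1_mind T1 a1 b1 (fun x _ => forall y, S x y -> rwin1 a2 b2 y)
  (fun x _ => forall y, S x y -> llose1 a2 b2 y)) H.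
- move=> x0 x' mv _ IH y Sxy.
  have [y' mv' S'] := forth _ _ _ Sxy mv.
  exact: (RWin1 mv' (IH _ S')).
- move=> x0 _ IH y Sxy; constructor=> y' mv'.
  have [x' mv S'] := back _ _ _ Sxy mv'.
  exact: IH mv _ S'.
Qed.
End Bisim2.

Lemma bisim_equiv (T1 T2 : Type) (mv1 : T1 -> T1 -> Prop) (mv2 : T2 -> T2 -> Prop)
  (S : T1 -> T2 -> Prop) G H :
  (forall x y x', S x y -> mv1 x x' -> exists2 y', mv2 y y' & S x' y') ->
  (forall x y y', S x y -> mv2 y y' -> exists2 x', mv1 x x' & S x' y') ->
  S G H -> game_equiv mv1 G mv2 H.
Proof.
move=> fo ba SGH X.
pose S1 := fun (p : T1 * pgame) (q : T2 * pgame) => S p.1 q.1 /\ p.2 = q.2.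
pose S2 := fun (q : T2 * pgame) (p : T1 * pgame) => S p.1 q.1 /\ p.2 = q.2.
have f1 : forall (o : pgame -> seq pgame) p q p', S1 p q ->
    ((mv1 p.1 p'.1 /\ p'.2 = p.2) \/ (inlist p'.2 (o p.2) /\ p'.1 = p.1)) ->
    exists2 q', ((mv2 q.1 q'.1 /\ q'.2 = q.2) \/ (inlist q'.2 (o q.2) /\ q'.1 = q.1)) & S1 p' q'.
  move=> o [x X1] [y Y1] [x' X'] [/= Sxy <-] /= [[m ->]|[i ->]].
  + have [y' m' S'] := fo _ _ _ Sxy m.
    by exists (y', X1); [left|].
  + by exists (y, X'); [right|].
have f2 : forall (o : pgame -> seq pgame) q p q', S2 q p ->
    ((mv2 q.1 q'.1 /\ q'.2 = q.2) \/ (inlist q'.2 (o q.2) /\ q'.1 = q.1)) ->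
    exists2 p', ((mv1 p.1 p'.1 /\ p'.2 = p.2) \/ (inlist p'.2 (o p.2) /\ p'.1 = p.1)) & S2 q' p'.
  move=> o [y Y1] [x X1] [y' Y'] [/= Sxy ->] /= [[m ->]|[i ->]].
  + have [x' m' S'] := ba _ _ _ Sxy m.
    by exists (x', Y1); [left|].
  + by exists (x, Y'); [right|].
have b1 : forall (o : pgame -> seq pgame) p q q', S1 p q ->
    ((mv2 q.1 q'.1 /\ q'.2 = q.2) \/ (inlist q'.2 (o q.2) /\ q'.1 = q.1)) ->
    exists2 p', ((mv1 p.1 p'.1 /\ p'.2 = p.2) \/ (inlist p'.2 (o p.2) /\ p'.1 = p.1)) & S1 p' q'.
  move=> o p q q' H1 H2; exact: (f2 o q p q' H1 H2).
have b2 : forall (o : pgame -> seq pgame) q p p', S2 q p ->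
    ((mv1 p.1 p'.1 /\ p'.2 = p.2) \/ (inlist p'.2 (o p.2) /\ p'.1 = p.1)) ->
    exists2 q', ((mv2 q.1 q'.1 /\ q'.2 = q.2) \/ (inlist q'.2 (o q.2) /\ q'.1 = q.1)) & S2 q' p'.
  move=> o q p p' H1 H2; exact: (f1 o p q p' H1 H2).
split; split=> W.
- exact: (@lwin1_transfer _ _ (sumL mv1) (sumR mv1) (sumL mv2) (sumR mv2) S1 (f1 pgame_left) (b1 pgame_right) (G,X) W (H,X) (conj SGH erefl)).
- exact: (@lwin1_transfer _ _ (sumL mv2) (sumR mv2) (sumL mv1) (sumR mv1) S2 (f2 pgame_left) (b2 pgame_right) (H,X) W (G,X) (conj SGH erefl)).
- exact: (@rwin1_transfer _ _ (sumL mv1) (sumR mv1) (sumL mv2) (sumR mv2) S1 (f1 pgame_right) (b1 pgame_left) (G,X) W (H,X) (conj SGH erefl)).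
- exact: (@rwin1_transfer _ _ (sumL mv2) (sumR mv2) (sumL mv1) (sumR mv1) S2 (f2 pgame_right) (b2 pgame_left) (H,X) W (G,X) (conj SGH erefl)).
Qed.
Set Implicit Arguments.
Unset Strict Implicit.

Definition ledom n (g h : cpos n) := forall i, tnth g i <= tnth h i.
Definition domP n (P Q : qpos n) := forall g, g \in P -> exists2 h, h \in Q & ledom g h.
Definition simP n (P Q : qpos n) := domP P Q /\ domP Q P.

Lemma ledom_trans n (g h l : cpos n) : ledom g h -> ledom h l -> ledom g l.
Proof. by move=> a b i; apply: leq_trans (a i) (b i). Qed.

Lemma domP_trans n (P Q S : qpos n) : domP P Q -> domP Q S -> domP P S.
Proof.
move=> a b g /a [h /b [l lS hl] gh]; exists l => //; exact: ledom_trans gh hl.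
Qed.

Lemma domP_refl n (P : qpos n) : domP P P.
Proof. by move=> g gP; exists g. Qed.

Lemma simP_trans n (P Q S : qpos n) : simP P Q -> simP Q S -> simP P S.
Proof. by move=> [a b] [c d]; split; [apply: domP_trans a c| apply: domP_trans d b]. Qed.

Lemma legal_mono n (m : cmove n) g h : ledom g h -> legal_in m g -> legal_in m h.
Proof.
by rewrite /legal_in => gh /andP [-> le]; rewrite (leq_trans le (gh _)).
Qed.

Lemma apply_tnth n (g : cpos n) m i :
  tnth (apply_move g m) i = if i == m.1 then tnth g i - m.2 else tnth g i.
Proof. by rewrite /apply_move tnth_mktuple. Qed.

Lemma apply_mono n (m : cmove n) g h : ledom g h -> ledom (apply_move g m) (apply_move h m).
Proof.
move=> gh i; rewrite !apply_tnth; case: (i == m.1) => //.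
exact: leq_sub2r.
Qed.

Lemma legal_q_dom n (P Q : qpos n) m : domP P Q -> legal_q P m -> legal_q Q m.
Proof.
move=> d [g /d [h hQ gh] lg]; exists h => //; exact: legal_mono lg.
Qed.

Lemma allowed_sim R n (P Q : qpos n) M : simP P Q -> allowed R P M -> allowed R Q M.
Proof.
move=> [d1 d2] [ne lM c]; split => //.
  by move=> m /lM; apply: legal_q_dom.
case: R c => //= -[|[c1 [m [l u]]]]; [by left| right; split => //].
exists m; split; first exact: legal_q_dom l.
by move=> m' /(legal_q_dom d2); apply: u.
Qed.

Lemma qresultP n (P : qpos n) M x :
  reflect (exists g, exists m, [/\ g \in P, m \in M, legal_in m g & x = apply_move g m])
    (x \in qresult P M).
Proof.
apply: (iffP idP).
  move=> /imfset2P [g] /= gP [m] /=; rewrite inE => /andP [mM lg] ->.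
  by exists g, m.
move=> [g [m [gP mM lg ->]]].
by apply/imfset2P; exists g => //; exists m => //=; rewrite inE mM lg.
Qed.

Lemma qresult_dom n (P Q : qpos n) M : domP P Q -> domP (qresult P M) (qresult Q M).
Proof.
move=> d x /qresultP [g [m [gP mM lg ->]]].
have [h hQ gh] := d g gP.
exists (apply_move h m); last exact: apply_mono.
by apply/qresultP; exists h, m; split => //; apply: legal_mono lg.
Qed.

Lemma qresult_sim n (P Q : qpos n) M : simP P Q -> simP (qresult P M) (qresult Q M).
Proof. by move=> [a b]; split; apply: qresult_dom. Qed.
Definition minM n (M : {fset cmove n}) : {fset cmove n} :=
  [fset m in M | all (fun m' : cmove n => (m'.1 == m.1) ==> (m.2 <= m'.2)) M].

Lemma minM_sub n (M : {fset cmove n}) : minM M `<=` M.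
Proof. by apply/fsubsetP => m; rewrite !inE => /andP []. Qed.

Lemma minM_ex n (M : {fset cmove n}) j m : m \in M -> m.2 <= j ->
  exists2 m0, m0 \in minM M & m0.1 = m.1 /\ m0.2 <= m.2.
Proof.
elim: j m => [|j IH] m mM.
  rewrite leqn0 => /eqP m0.
  exists m; last by [].
rewrite !inE mM /=; apply/allP => m' _; apply/implyP => _; by rewrite m0 leq0n.
move=> le.
case: (boolP (m \in minM M)) => [h|]; first by exists m.
rewrite !inE mM /= => /allPn [m' m'M] /=.
rewrite negb_imply -ltnNge => /andP [/eqP e lt].
have [m0 m0M [e0 l0]] := IH m' m'M (leq_trans (ltnSE (leq_trans lt le)) (leqnn _)).
  exists m0 => //; split; first by rewrite e0 e.
  exact: leq_trans l0 (ltnW lt).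
Qed.

Lemma minM_card n (M : {fset cmove n}) : #|` minM M| <= n.
Proof.
have inj : {in minM M &, injective (fun m : cmove n => m.1)}.
  move=> [i a] [i' b]; rewrite !inE => /andP [aM /allP aA] /andP [bM /allP bA] /= e.
  subst i'.
  have := aA _ bM; have := bA _ aM; rewrite /= eqxx /= => h1 h2.
  by apply/eqP; rewrite xpair_eqE eqxx /= eqn_leq h1 h2.
rewrite -(eqP (introT (card_in_imfsetP _ _) inj)).
have sub : (fun m : cmove n => m.1) @` minM M `<=` [fset x in enum 'I_n].
  by apply/fsubsetP => x _; rewrite inE mem_enum.
apply: leq_trans (fsubset_leq_card sub) _.
by rewrite card_fseq undup_id ?enum_uniq // size_enum_ord.
Qed.

Lemma between_sim n (P : qpos n) (M M' : {fset cmove n}) :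
  (forall m, m \in M -> legal_q P m) ->
  minM M `<=` M' -> M' `<=` M -> simP (qresult P M) (qresult P M').
Proof.
move=> lM s1 s2; split.
  move=> x /qresultP [g [m [gP mM lg ->]]].
  have [m0 m0M [e0 l0]] := minM_ex mM (leqnn m.2).
  have m0M' : m0 \in M := fsubsetP (minM_sub M) _ m0M.
  have [g' _ /andP [p0 _]] := lM _ m0M'.
  have lg0 : legal_in m0 g.
    move: lg; rewrite /legal_in => /andP [_ l]; rewrite p0 /= e0.
    exact: leq_trans l0 l.
  exists (apply_move g m0).
    apply/qresultP; exists g, m0; split => //; exact: (fsubsetP s1).
  move=> i; rewrite !apply_tnth e0; case: (i == m.1) => //.
  exact: leq_sub2l.
move=> x /qresultP [g [m [gP mM lg ->]]].
exists (apply_move g m) => //.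
by apply/qresultP; exists g, m; split => //; apply: (fsubsetP s2).
Qed.

Lemma reduce R k n (P : qpos n) M :
  (R = RulesetD \/ 2 <= k) -> n <= k -> allowed R P M ->
  exists M', [/\ allowed R P M', #|` M'| <= k & simP (qresult P M) (qresult P M')].
Proof.
move=> hR hn aM.
have [ne lM c] := aM.
case: (leqP #|` M| k) => hk.
  by exists M; split => //; split; apply: domP_refl.
have [m mM] : exists m, m \in M.
  case: (fset_0Vmem M) => [e|[m mM]]; last by exists m.
  by move: ne; rewrite e eqxx.
have [m0 m0M _] := minM_ex mM (leqnn m.2).
have cM0 := minM_card M.
have ne0 : minM M != fset0.
  by apply/negP => /eqP e; rewrite e inE in m0M.
case: hR => [eR|k2].
  exists (minM M); split.
  - rewrite eR; split => //; move=> m' /(fsubsetP (minM_sub M)); apply: lM.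
  - exact: leq_trans cM0 hn.
  - by apply: between_sim => //; rewrite ?fsubset_refl ?minM_sub.
have allowed2 : forall M', M' `<=` M -> 2 <= #|` M'| -> allowed R P M'.
  move=> M' sub c2; split.
  - by apply/negP => /eqP e; rewrite e cardfs0 in c2.
  - by move=> m' /(fsubsetP sub); apply: lM.
  - by case: R {aM c}; [| left |].
case: (leqP 2 #|` minM M|) => c2.
  exists (minM M); split.
  - exact: allowed2 (minM_sub M) c2.
  - exact: leq_trans cM0 hn.
  - by apply: between_sim => //; rewrite ?fsubset_refl ?minM_sub.
have : ~~ (M `<=` minM M).
  apply/negP => /fsubset_leq_card h.
  have := leq_trans h cM0; have := leq_ltn_trans hn hk; rewrite ltnNge => /negP; done.
move=> /fsubsetPn [m1 m1M m1n].
have sub : m1 |` minM M `<=` M.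
  by apply/fsubsetP => x /fset1UP [->|/(fsubsetP (minM_sub M))].
have card1 : #|` m1 |` minM M| = (#|` minM M|).+1 by rewrite cardfsU1 m1n.
have pos : 0 < #|` minM M| by rewrite cardfs_gt0.
exists (m1 |` minM M); split.
- by apply: allowed2 sub _; rewrite card1.
- by rewrite card1; apply: leq_trans k2; rewrite ltnS -ltnS.
- by apply: between_sim => //; rewrite ?fsubsetU1 ?sub.
Qed.

Theorem corollary2 (R : ruleset) (k n : nat) (P : qpos n) :
  (R = RulesetD \/ 2 <= k) -> n <= k -> P != fset0 ->
  game_equiv (@qmove R n) P (@qmove_le R k n) P.
Proof.
move=> hR hn _.
apply: (@bisim_equiv _ _ _ _ (@simP n)); last by split; apply: domP_refl.
- move=> x y x' sxy [M aM ->].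
  have aM' := allowed_sim sxy aM.
  have [M' [a' c' s']] := reduce hR hn aM'.
  exists (qresult y M'); first by exists M'.
  exact: simP_trans (qresult_sim M sxy) s'.
- move=> x y y' sxy [M [aM cM] ->].
  have sym : simP y x by case: sxy.
  exists (qresult x M); first by exists M => //; apply: allowed_sim sym aM.
  exact: qresult_sim.
Qed.
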